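(* Let $n,m,k\ge1$, $C:\{0,1\}^n\to\{0,1\}^m$, $V:\{0,1\}^m\times\{0,1\}^\ell\to\{0,1\}$, $\varepsilon\in(0,1/25]$, $\alpha>1$, $p_H,p_{UH}\in[0,1]$ with $p_H\in[g_H\pm\frac45\sqrt\varepsilon]$ and $p_{UH}\in[g_{UH}\pm10\sqrt\varepsilon]$. Let $y_1,\dots,y_k\in\{0,1\}^m$ be arbitrary, $u:[k]\to\mathbb{Z}_{\ge0}\cup\{\infty\}$, $\mathcal{Y}\subseteq[k]$ and $w_i\in\{0,1\}^\ell$ ($i\in\mathcal{Y}$); let $\mathcal{L}=\{i\in[k]:2^{-(u(i)+1)\varepsilon}<\alpha2^{-m}\}$ and $\mathcal{H}=[k]\setminus\mathcal{L}$. Assume: (a) $|\mathcal{Y}|/k\in[g_{UY}\pm\varepsilon]$; (b) $V(y_i,w_i)=1$ for all $i\in\mathcal{Y}$; (c) $|\mathcal{H}|/k\in[p_{UH}\pm3\sqrt\varepsilon]$; (d) $\frac1k\sum_{i\in\mathcal{L}}2^m2^{-u(i)\varepsilon}\in[1-p_H\pm5\sqrt\varepsilon]$; (1) $\Pr_{y\leftarrow\mathcal{D}^C}[\mathcal{D}^C(y)\in(1\pm4\varepsilon)\alpha2^{-m}]\le\sqrt\varepsilon$; (2) for all $i$: $u'(i)=\infty\Rightarrow u(i)=\infty$; (3) for all $i$: $u(i)=\infty$ or $\mathcal{D}^C(y_i)>(1-\varepsilon/2)2^{-(u(i)+1)\varepsilon}$; (4) $\frac1k|\{i:y_i\in\mathcal{M}\}|<3\sqrt\varepsilon/\alpha$;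 (5) $|\mathcal{Y}'|/k\in[g_{UY}\pm\varepsilon]$; (6) $|\mathcal{H}'|/k\in[g_{UH}\pm3\sqrt\varepsilon]$; (7) $\frac1k\sum_{i\in\mathcal{L}'}2^m2^{-u'(i)\varepsilon}\in[1-g_H\pm5\sqrt\varepsilon]$; (8) $\frac1k\sum_{i\in\mathcal{L}'\cap\mathcal{Y}'}2^m2^{-u'(i)\varepsilon}\in[g_{YL}\pm5\sqrt\varepsilon]$. Then $\frac1k\sum_{i\in\mathcal{L}\cap\mathcal{Y}}2^m2^{-u(i)\varepsilon}\in[g_{YL}\pm112\sqrt\varepsilon\,\alpha]$.
   Context: $\mathcal{D}^C(y)=\Pr_{r\leftarrow\{0,1\}^n}[C(r)=y]$ for uniform $r$. For $y\in\{0,1\}^m$ write $y\in V$ if there is $w$ with $V(y,w)=1$. Let $t=\lceil n/\varepsilon\rceil$, $\mathcal{B}_j=\{y:\mathcal{D}^C(y)\in(2^{-(j+1)\varepsilon},2^{-j\varepsilon}]\}$ for $j\in\{0,\dots,t\}$, and $u'(y)=j$ if $y\in\mathcal{B}_j$, $u'(y)=\infty$ otherwise; conventions $2^{-\infty\varepsilon}=0$, $j<\infty$, $\infty+j=\infty$. $g_H=\Pr_{y\leftarrow\mathcal{D}^C}[\mathcal{D}^C(y)\ge\alpha2^{-m}]$, $g_{UH}=\Pr_{y\text{ uniform}}[\mathcal{D}^C(y)\ge\alpha2^{-m}]$, $g_{UY}=\Pr_{y\text{ uniform}}[y\in V]$, $g_{YL}=\Pr_{y\leftarrow\mathcal{D}^C}[\mathcal{D}^C(y)<\alpha2^{-m}\wedge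 y\in V]$. For the given $y_1,\dots,y_k$: $u'(i):=u'(y_i)$, $\mathcal{Y}'=\{i:y_i\in V\}$, $\mathcal{L}'=\{i:2^{-(u'(i)+1)\varepsilon}<\alpha2^{-m}\}$, $\mathcal{H}'=[k]\setminus\mathcal{L}'$, $\mathcal{M}=\{y:\mathcal{D}^C(y)\in(1\pm4\varepsilon)\alpha2^{-m}\}$. $[a\pm b]=[a-b,a+b]$, $(1\pm\delta)x=[(1-\delta)x,(1+\delta)x]$, $[k]=\{1,\dots,k\}$. *)

(* Defs.v *)
From Stdlib Require Import Reals.
From mathcomp Require Import all_boot.
Set Implicit Arguments. Unset Strict Implicit. Unset Printing Implicit Defensive.

Local Open Scope R_scope.

Notation bits n := (n.-tuple bool).

Definition Rltb (x y : R) : bool := if Rlt_dec x y then true else false.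
Definition Rleb (x y : R) : bool := if Rle_dec x y then true else false.

Definition in_pm (x a b : R) : Prop := a - b <= x <= a + b.

Definition DC (n m : nat) (C : bits n -> bits m) (y : bits m) : R :=
  INR #|[pred r : bits n | C r == y]| / 2 ^ n.

(* values in Z_{>=0} ∪ {∞}: None = ∞.  ex2 eps o s = 2^{-(o+s) eps}, with 2^{-∞ eps}=0 *)
Definition ex2 (eps : R) (o : option nat) (s : nat) : R :=
  match o with Some j => Rpower 2 (- INR (j + s) * eps) | None => 0 end.

(* t = ceil(n / eps) *)
Definition tpar (n : nat) (eps : R) : nat :=
  Z.to_nat (- Int_part (- (INR n / eps))).

Definition inBin (n m : nat) (C : bits n -> bits m) (eps : R) (j : nat) (y : bits m) : bool :=
  Rltb (Rpower 2 (- INR (j + 1) * eps)) (DC C y) && Rleb (DC C y) (Rpower 2 (- INR j * eps)).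

(* u'(y): the j in {0..t} with y ∈ B_j (bins are disjoint), else ∞ *)
Definition uprime (n m : nat) (C : bits n -> bits m) (eps : R) (y : bits m) : option nat :=
  let s := [seq j <- iota 0 (tpar n eps).+1 | inBin C eps j y] in
  match s with j :: _ => Some j | [::] => None end.

Definition inV (m l : nat) (V : bits m -> bits l -> bool) (y : bits m) : bool :=
  [exists w : bits l, V y w].

(* g_H = Pr_{y <- D^C}[D^C(y) >= alpha 2^-m] *)
Definition gH (n m : nat) (C : bits n -> bits m) (alpha : R) : R :=
  (\big[Rplus/0]_(r : bits n) (if Rleb (alpha / 2 ^ m) (DC C (C r)) then 1 else 0)) / 2 ^ n.

Definition gUH (n m : nat) (C : bits n -> bits m) (alpha : R) : R :=
  (\big[Rplus/0]_(y : bits m) (if Rleb (alpha / 2 ^ m) (DC C y) then 1 else 0)) / 2 ^ m.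

Definition gUY (m l : nat) (V : bits m -> bits l -> bool) : R :=
  (\big[Rplus/0]_(y : bits m) (if inV V y then 1 else 0)) / 2 ^ m.

(* g_YL = Pr_{y <- D^C}[D^C(y) < alpha 2^-m /\ y ∈ V] *)
Definition gYL (n m l : nat) (C : bits n -> bits m) (V : bits m -> bits l -> bool) (alpha : R) : R :=
  (\big[Rplus/0]_(r : bits n)
     (if Rltb (DC C (C r)) (alpha / 2 ^ m) && inV V (C r) then 1 else 0)) / 2 ^ n.

Definition inM (n m : nat) (C : bits n -> bits m) (eps alpha : R) (y : bits m) : bool :=
  Rleb ((1 - 4 * eps) * (alpha / 2 ^ m)) (DC C y) &&
  Rleb (DC C y) ((1 + 4 * eps) * (alpha / 2 ^ m)).

(* Main.v *)
Require Import Defs.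
From Stdlib Require Import Reals.
From mathcomp Require Import all_boot.
From HB Require Import structures.
From Stdlib Require Import Lra.
Local Open Scope R_scope.

Lemma RplusA : associative Rplus. Proof. by move=> *; rewrite Rplus_assoc. Qed.
HB.instance Definition _ := Monoid.isComLaw.Build R 0 Rplus RplusA Rplus_comm Rplus_0_l.

Lemma sumZ (T : finType) (c : R) (F : T -> R) :
  \big[Rplus/0]_(i : T) (c * F i) = c * \big[Rplus/0]_(i : T) F i.
Proof.
apply: (big_rec2 (fun x y => x = c * y)); first by ring.
by move=> i y1 y2 _ ->; ring.
Qed.

Lemma sumB (T : finType) (F G : T -> R) :
  \big[Rplus/0]_(i : T) (F i - G i) = \big[Rplus/0]_(i : T) F i - \big[Rplus/0]_(i : T) G i.
Proof.
apply: (big_rec3 (fun x y z => x = y - z)); first by ring.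
by move=> i y1 y2 y3 _ ->; ring.
Qed.

Lemma sumD (T : finType) (F G : T -> R) :
  \big[Rplus/0]_(i : T) (F i + G i) = \big[Rplus/0]_(i : T) F i + \big[Rplus/0]_(i : T) G i.
Proof. exact: big_split. Qed.

Lemma sum_le (T : finType) (F G : T -> R) :
  (forall i, F i <= G i) -> \big[Rplus/0]_(i : T) F i <= \big[Rplus/0]_(i : T) G i.
Proof.
move=> H; apply: (big_rec2 (fun x y => x <= y)); first lra.
move=> i y1 y2 _ h; have := H i; lra.
Qed.

Lemma card_sum (T : finType) (A : {pred T}) :
  INR #|A| = \big[Rplus/0]_(i : T) (if i \in A then 1 else 0).
Proof.
rewrite -sum1_card (big_morph INR plus_INR (erefl _)) big_mkcond /=.
by apply: eq_bigr => i _; case: (i \in A).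
Qed.

Lemma Rltb_t x y : Rltb x y = true -> x < y.
Proof. by rewrite /Rltb; case: Rlt_dec. Qed.
Lemma Rltb_f x y : Rltb x y = false -> y <= x.
Proof. rewrite /Rltb; case: Rlt_dec => // h _; lra. Qed.
Lemma Rleb_t x y : Rleb x y = true -> x <= y.
Proof. by rewrite /Rleb; case: Rle_dec. Qed.
Lemma Rleb_i x y : x <= y -> Rleb x y = true.
Proof. by rewrite /Rleb; case: Rle_dec. Qed.

Lemma ex2_nn e o s : 0 <= ex2 e o s.
Proof. case: o => [j|] /=; last lra. rewrite /Rpower; left; apply: exp_pos. Qed.

Lemma ex2_rel e j : ex2 e (Some j) 0 = Rpower 2 e * ex2 e (Some j) 1.
Proof.
rewrite /= -Rpower_plus; congr Rpower.
rewrite addn0 addn1 S_INR; ring.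
Qed.

Lemma pow2_le e : 0 <= e <= 1/4 -> Rpower 2 e <= 1 + 2 * e.
Proof.
move=> he.
have hl : ln 2 <= 1.
  have : ln 2 < ln (exp 1).
    apply: ln_increasing; first lra.
    have := exp_ineq1 1; lra.
  rewrite ln_exp; lra.
have hl0 : 0 < ln 2 by have := ln_lt_2; lra.
rewrite /Rpower; set x := e * ln 2.
have hx : 0 <= x <= e by rewrite /x; split; nra.
have h1 := exp_ineq1_le (- x).
have h2 : exp x * exp (- x) = 1 by rewrite -exp_plus Rplus_opp_r exp_0.
have h3 := exp_pos x.
nra.
Qed.

Lemma up_bin n m (C : bits n -> bits m) e y j :
  uprime C e y = Some j -> DC C y <= ex2 e (Some j) 0.
Proof.
rewrite /uprime; case E: [seq _ <- _ | _] => [|j' s] // [<-].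
have : j' \in [seq j <- iota 0 (tpar n e).+1 | inBin C e j y] by rewrite E inE eqxx.
rewrite mem_filter => /andP[/andP[_ /Rleb_t h] _] /=.
by rewrite addn0.
Qed.

Lemma card_sumP (T : finType) (P : pred T) :
  INR #|[pred i : T | P i]| = \big[Rplus/0]_(i : T) (if P i then 1 else 0).
Proof. by rewrite card_sum; apply: eq_bigr => i _; rewrite inE. Qed.

Lemma card_sumS (T : finType) (A : {set T}) :
  INR #|A| = \big[Rplus/0]_(i : T) (if i \in A then 1 else 0).
Proof.
rewrite -sum1_card (big_morph INR plus_INR (erefl _)) big_mkcond /=.
by apply: eq_bigr => i _; case: (i \in A).
Qed.

Section PW.
Variables (eps alpha M2 D : R) (uo up : option nat).
Hypotheses (heps : 0 < eps <= 1/25) (hal : 1 < alpha) (hM2 : 0 < M2)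
  (h2 : up = None -> uo = None)
  (h3 : uo = None \/ D > (1 - eps/2) * ex2 eps uo 1)
  (hbin : forall j, up = Some j -> D <= ex2 eps (Some j) 0).

Let t := alpha / M2.
Local Notation R2 := (Rpower 2 eps).
Lemma ht : 0 < t. Proof. rewrite /t; apply: Rdiv_lt_0_compat; lra. Qed.
Lemma hR2 : R2 <= 1 + 2 * eps. Proof. apply: pow2_le; lra. Qed.
Lemma hR2p : 0 < R2. Proof. rewrite /R2 /Rpower; apply: exp_pos. Qed.
Lemma M2t : M2 * t = alpha. Proof. rewrite /t; field; lra. Qed.

Lemma F3 : 0 <= (if Rltb (ex2 eps up 1) t then M2 * ex2 eps up 0 else 0) <= 2 * alpha.
Proof.
have := M2t; have := hR2; have := hR2p.
case E: Rltb; last lra.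
move/Rltb_t: E; case: up => [j|]; last by rewrite /=; lra.
rewrite (ex2_rel eps j).
move=> h0 h1 h2' h3'.
have e1 := ex2_nn eps (Some j) 1.
have a1 : R2 * ex2 eps (Some j) 1 <= 2 * t by nra.
have a2 : 0 <= R2 * ex2 eps (Some j) 1 by nra.
split; first nra.
have := Rmult_le_compat_l M2 _ _ (Rlt_le _ _ hM2) a1; lra.
Qed.

Lemma F1 : (if Rltb (ex2 eps uo 1) t then M2 * ex2 eps uo 0 else 0) <=
  (1 + 3 * eps) * (if Rltb (ex2 eps up 1) t then M2 * ex2 eps up 0 else 0)
  + 2 * alpha * (if Rltb (ex2 eps uo 1) t && ~~ Rltb (ex2 eps up 1) t then 1 else 0).
Proof.
have := M2t; have := hR2; have := hR2p; have := F3.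
case E1: (Rltb (ex2 eps uo 1) t) => /=; last first.
  rewrite /=; case: Rltb => /= *; nra.
case: uo h2 h3 E1 => [j|] h2' h3' E1; last first.
  rewrite /=; case: Rltb => /= *; nra.
rewrite (ex2_rel eps j).
have e1 := ex2_nn eps (Some j) 1.
case E2: (Rltb (ex2 eps up 1) t).
  case: up h2' hbin E2 => [j'|] h2' hbin' E2; last by have := h2' erefl.
  have hD := hbin' j' erefl.
  case: h3' => // hD' *.
  have e2 := ex2_nn eps (Some j') 0.
  have a1 : R2 * ex2 eps (Some j) 1 <= (1 + 2*eps) * ex2 eps (Some j) 1 by nra.
  have c : 1 + 2*eps <= (1+3*eps)*(1-eps/2) by nra.
  have a2 : (1 + 2*eps) * ex2 eps (Some j) 1 <= (1 + 3*eps) * ((1 - eps/2) * ex2 eps (Some j) 1).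
    rewrite -Rmult_assoc; apply: Rmult_le_compat_r; lra.
  have a3 : (1 + 3*eps) * ((1 - eps/2) * ex2 eps (Some j) 1) <= (1 + 3*eps) * ex2 eps (Some j') 0.
    apply: Rmult_le_compat_l; lra.
  have a4 : R2 * ex2 eps (Some j) 1 <= (1 + 3*eps) * ex2 eps (Some j') 0 by lra.
  have := Rmult_le_compat_l M2 _ _ (Rlt_le _ _ hM2) a4.
  rewrite /=; lra.
move/Rltb_t: E1 => E1 *.
have a1 : R2 * ex2 eps (Some j) 1 <= 2 * t by nra.
have := Rmult_le_compat_l M2 _ _ (Rlt_le _ _ hM2) a1.
rewrite /=; lra.
Qed.

Lemma F2 : (if Rltb (ex2 eps uo 1) t && ~~ Rltb (ex2 eps up 1) t then 1 else 0) <=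
  (if ~~ Rltb (ex2 eps up 1) t then 1 else 0) - (if ~~ Rltb (ex2 eps uo 1) t then 1 else 0)
  + (if Rleb ((1 - 4 * eps) * t) D && Rleb D ((1 + 4 * eps) * t) then 1 else 0).
Proof.
have ht' := ht; have := hR2; have := hR2p.
case E1: (Rltb (ex2 eps uo 1) t); case E2: (Rltb (ex2 eps up 1) t) => /=;
  try by case: (_ && _); lra.
move/Rltb_f: E1 => E1; move/Rltb_t: E2 => E2 h0 h1.
case: uo h2 h3 E1 => [j|] h2' h3' E1; last by move: E1 => /=; lra.
case: h3' => // hD.
case: up h2' hbin E2 => [j'|] h2' hbin' E2; last by have := h2' erefl.
have hD2 := hbin' j' erefl.
rewrite (ex2_rel eps j') in hD2.
have e2 := ex2_nn eps (Some j') 1.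
rewrite Rleb_i; last first.
  have : (1 - eps/2) * t <= (1 - eps/2) * ex2 eps (Some j) 1.
    apply: Rmult_le_compat_l; lra.
  have : (1 - 4 * eps) * t <= (1 - eps/2) * t by nra.
  lra.
rewrite Rleb_i /=; first lra.
have : R2 * ex2 eps (Some j') 1 <= (1 + 2*eps) * ex2 eps (Some j') 1 by nra.
have : (1 + 2*eps) * ex2 eps (Some j') 1 <= (1 + 4*eps) * t by nra.
lra.
Qed.

Lemma Upper (Yb Vb : bool) : (Yb -> Vb) ->
  (if Rltb (ex2 eps uo 1) t && Yb then M2 * ex2 eps uo 0 else 0) <=
  (if Rltb (ex2 eps up 1) t && Vb then M2 * ex2 eps up 0 else 0)
  + 3 * eps * (if Rltb (ex2 eps up 1) t then M2 * ex2 eps up 0 else 0)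
  + 2 * alpha * ((if ~~ Rltb (ex2 eps up 1) t then 1 else 0) - (if ~~ Rltb (ex2 eps uo 1) t then 1 else 0)
  + (if Rleb ((1 - 4 * eps) * t) D && Rleb D ((1 + 4 * eps) * t) then 1 else 0)).
Proof.
move=> hY; have := F1; have := F2; have := F3.
set Mb := (Rleb _ _ && Rleb _ _).
set a := M2 * ex2 eps uo 0; set b := M2 * ex2 eps up 0.
have := hR2p.
case: (Rltb (ex2 eps uo 1) t); case: (Rltb (ex2 eps up 1) t); case: Mb;
 (case: Yb hY => [/(_ isT) ->|_]; [|case: Vb]) => /=; move=> *; nra.
Qed.

Lemma Lower (Yb Vb : bool) : (Yb -> Vb) ->
  (if Rltb (ex2 eps uo 1) t then M2 * ex2 eps uo 0 else 0)
  - (if Rltb (ex2 eps up 1) t then M2 * ex2 eps up 0 else 0)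
  + (if Rltb (ex2 eps up 1) t && Vb then M2 * ex2 eps up 0 else 0)
  - 2 * alpha * ((if Vb then 1 else 0) - (if Yb then 1 else 0))
  - 3 * eps * (if Rltb (ex2 eps up 1) t then M2 * ex2 eps up 0 else 0)
  - 2 * alpha * ((if ~~ Rltb (ex2 eps up 1) t then 1 else 0) - (if ~~ Rltb (ex2 eps uo 1) t then 1 else 0)
  + (if Rleb ((1 - 4 * eps) * t) D && Rleb D ((1 + 4 * eps) * t) then 1 else 0))
  <= (if Rltb (ex2 eps uo 1) t && Yb then M2 * ex2 eps uo 0 else 0).
Proof.
move=> hY; have := F1; have := F2; have := F3.
set Mb := (Rleb _ _ && Rleb _ _).
set a := M2 * ex2 eps uo 0; set b := M2 * ex2 eps up 0.
have := hR2p.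
case: (Rltb (ex2 eps uo 1) t); case: (Rltb (ex2 eps up 1) t); case: Mb;
 (case: Yb hY => [/(_ isT) ->|_]; [|case: Vb]) => /=; move=> *; nra.
Qed.
End PW.
Theorem mainTheorem9
  (n m k l : nat) (C : bits n -> bits m) (V : bits m -> bits l -> bool)
  (eps alpha pH pUH : R)
  (ys : 'I_k -> bits m) (u : 'I_k -> option nat) (Y : {set 'I_k}) (w : 'I_k -> bits l)
  (hn : (1 <= n)%N) (hm : (1 <= m)%N) (hk : (1 <= k)%N)
  (heps : 0 < eps <= 1 / 25) (halpha : 1 < alpha)
  (hpH01 : 0 <= pH <= 1) (hpUH01 : 0 <= pUH <= 1)
  (hpH : in_pm pH (gH C alpha) (4 / 5 * sqrt eps))
  (hpUH : in_pm pUH (gUH C alpha) (10 * sqrt eps))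
  (* L = {i : 2^{-(u(i)+1)eps} < alpha 2^-m}, H = [k] \ L *)
  (ha : in_pm (INR #|Y| / INR k) (gUY V) eps)
  (hb : forall i, i \in Y -> V (ys i) (w i) = true)
  (hc : in_pm (INR #|[pred i : 'I_k | ~~ Rltb (ex2 eps (u i) 1) (alpha / 2 ^ m)]| / INR k)
          pUH (3 * sqrt eps))
  (hd : in_pm ((\big[Rplus/0]_(i : 'I_k | Rltb (ex2 eps (u i) 1) (alpha / 2 ^ m))
                  (2 ^ m * ex2 eps (u i) 0)) / INR k)
          (1 - pH) (5 * sqrt eps))
  (h1 : (\big[Rplus/0]_(r : bits n) (if inM C eps alpha (C r) then 1 else 0)) / 2 ^ n <= sqrt eps)
  (h2 : forall i, uprime C eps (ys i) = None -> u i = None)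
  (h3 : forall i, u i = None \/ DC C (ys i) > (1 - eps / 2) * ex2 eps (u i) 1)
  (h4 : INR #|[pred i : 'I_k | inM C eps alpha (ys i)]| / INR k < 3 * sqrt eps / alpha)
  (h5 : in_pm (INR #|[pred i : 'I_k | inV V (ys i)]| / INR k) (gUY V) eps)
  (h6 : in_pm (INR #|[pred i : 'I_k |
                 ~~ Rltb (ex2 eps (uprime C eps (ys i)) 1) (alpha / 2 ^ m)]| / INR k)
          (gUH C alpha) (3 * sqrt eps))
  (h7 : in_pm ((\big[Rplus/0]_(i : 'I_k | Rltb (ex2 eps (uprime C eps (ys i)) 1) (alpha / 2 ^ m))
                  (2 ^ m * ex2 eps (uprime C eps (ys i)) 0)) / INR k)
          (1 - gH C alpha) (5 * sqrt eps))
  (h8 : in_pm ((\big[Rplus/0]_(i : 'I_k | Rltb (ex2 eps (uprime C eps (ys i)) 1) (alpha / 2 ^ m)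
                                   && inV V (ys i))
                  (2 ^ m * ex2 eps (uprime C eps (ys i)) 0)) / INR k)
          (gYL C V alpha) (5 * sqrt eps)) :
  in_pm ((\big[Rplus/0]_(i : 'I_k | Rltb (ex2 eps (u i) 1) (alpha / 2 ^ m) && (i \in Y))
            (2 ^ m * ex2 eps (u i) 0)) / INR k)
        (gYL C V alpha) (112 * sqrt eps * alpha).
Proof.
have hM2 : 0 < 2 ^ m by apply: pow_lt; lra.
have hK : 0 < INR k by apply: lt_0_INR; apply/ltP.
set K := INR k in ha hc hd h4 h5 h6 h7 h8 hK *.
have pm : forall S a b, in_pm (S / K) a b -> K * (a - b) <= S <= K * (a + b).
  move=> S a b [h h']; split.
    have := Rmult_le_compat_l K _ _ (Rlt_le _ _ hK) h.
    have -> : K * (S / K) = S by field; lra.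
    done.
  have := Rmult_le_compat_l K _ _ (Rlt_le _ _ hK) h'.
  have -> : K * (S / K) = S by field; lra.
  done.
have hbin : forall i j, uprime C eps (ys i) = Some j -> DC C (ys i) <= ex2 eps (Some j) 0.
  by move=> i j; apply: up_bin.
have hY : forall i, i \in Y -> inV V (ys i).
  by move=> i /hb hv; apply/existsP; exists (w i).
have U := fun i => Upper _ _ _ (DC C (ys i)) _ _ heps halpha hM2 (h2 i) (h3 i) (hbin i) _ _ (hY i).
have L := fun i => Lower _ _ _ (DC C (ys i)) _ _ heps halpha hM2 (h2 i) (h3 i) (hbin i) _ _ (hY i).
rewrite card_sumS !card_sumP in ha hc h4 h5 h6.
rewrite big_mkcond in hd; rewrite big_mkcond in h7; rewrite big_mkcond in h8.
rewrite big_mkcond.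
rewrite /inM in h4.
set T := \big[Rplus/0]_(i : 'I_k) (if Rltb (ex2 eps (u i) 1) (alpha / 2 ^ m) && (i \in Y) then _ else _).
set SA := \big[Rplus/0]_(i : 'I_k) (if Rltb (ex2 eps (u i) 1) (alpha / 2 ^ m) then _ else _) in hd.
set SB := \big[Rplus/0]_(i : 'I_k) (if Rltb (ex2 eps (uprime C eps (ys i)) 1) (alpha / 2 ^ m) then _ else _) in h7.
set SBY := \big[Rplus/0]_(i : 'I_k) (if Rltb (ex2 eps (uprime C eps (ys i)) 1) (alpha / 2 ^ m) && _ then _ else _) in h8.
set cY := \big[Rplus/0]_(i : 'I_k) (if i \in Y then _ else _) in ha.
set cY' := \big[Rplus/0]_(i : 'I_k) (if inV V (ys i) then _ else _) in h5.
set cH := \big[Rplus/0]_(i : 'I_k) (if ~~ Rltb (ex2 eps (u i) 1) (alpha / 2 ^ m) then _ else _) in hc.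
set cH' := \big[Rplus/0]_(i : 'I_k) (if ~~ Rltb (ex2 eps (uprime C eps (ys i)) 1) (alpha / 2 ^ m) then _ else _) in h6.
set cM := \big[Rplus/0]_(i : 'I_k) (if Rleb _ _ && _ then _ else _) in h4.
have hU : T <= SBY + 3 * eps * SB + 2 * alpha * (cH' - cH + cM).
  apply: (Rle_trans _ _ _ (@sum_le _ _ _ U)); right.
  by repeat (rewrite sumB || rewrite sumD || rewrite sumZ).
have hL : SA - SB + SBY - 2 * alpha * (cY' - cY) - 3 * eps * SB - 2 * alpha * (cH' - cH + cM) <= T.
  apply: (Rle_trans _ _ _ _ (@sum_le _ _ _ L)); right.
  by repeat (rewrite sumB || rewrite sumD || rewrite sumZ).
have hKi : 0 < / K by apply: Rinv_0_lt_compat.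
have hUn : T / K <= SBY/K + 3*eps*(SB/K) + 2*alpha*(cH'/K - cH/K + cM/K).
  have e : (SBY + 3*eps*SB + 2*alpha*(cH'-cH+cM)) / K = SBY/K + 3*eps*(SB/K) + 2*alpha*(cH'/K - cH/K + cM/K) by field; lra.
  rewrite -e; apply: Rmult_le_compat_r; lra.
have hLn : SA/K - SB/K + SBY/K - 2 * alpha * (cY'/K - cY/K) - 3 * eps * (SB/K) - 2 * alpha * (cH'/K - cH/K + cM/K) <= T/K.
  have e : (SA - SB + SBY - 2 * alpha * (cY' - cY) - 3 * eps * SB - 2 * alpha * (cH' - cH + cM)) / K = SA/K - SB/K + SBY/K - 2 * alpha * (cY'/K - cY/K) - 3 * eps * (SB/K) - 2 * alpha * (cH'/K - cH/K + cM/K) by field; lra.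
  rewrite -e; apply: Rmult_le_compat_r; lra.
move: (T/K) (SA/K) (SB/K) (SBY/K) (cY/K) (cY'/K) (cH/K) (cH'/K) (cM/K) hUn hLn ha hc hd h4 h5 h6 h7 h8
  => qT qA qB qBY qY qY' qH qH' qM hUn hLn ha hc hd h4 h5 h6 h7 h8.
have hs0 := sqrt_pos eps.
have hss : sqrt eps * sqrt eps = eps by apply: sqrt_sqrt; lra.
move: hs0 hss hpH hpUH ha hc hd h4 h5 h6 h7 h8 hUn hLn.
rewrite /in_pm; move: (sqrt eps) => s hs0 hss hpH hpUH ha hc hd h4 h5 h6 h7 h8 hUn hLn.
have hs15 : s <= 1/5 by nra.
have P1 : alpha * (qH' - qH) <= alpha * (16 * s).
  apply: Rmult_le_compat_l; lra.
have P2 : alpha * qM <= 3 * s.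
  have : alpha * qM <= alpha * (3 * s / alpha) by apply: Rmult_le_compat_l; lra.
  have -> : alpha * (3 * s / alpha) = 3 * s by field; lra.
  done.
have P3 : alpha * (qY' - qY) <= alpha * (2 * eps).
  apply: Rmult_le_compat_l; lra.
have P4 : eps * qB <= eps * (11/5).
  apply: Rmult_le_compat_l; lra.
have P5 : eps <= s / 5 by nra.
have P6 : s <= alpha * s by nra.
have P7 : alpha * eps <= alpha * (s / 5) by apply: Rmult_le_compat_l; lra.
split; lra.
Qed.
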